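(* Let $p,\tilde{p} \in [0,1]$ and let $\mathbf{x} = (x_1,x_2,u)$ and $\tilde{\mathbf{x}} = (\tilde{x}_1,\tilde{x}_2,\tilde{u})$ be arbitrary configurations of $n$ agents. Then for all $t \geq 0$: (1) if $\tilde{p} \leq p$, $\tilde{x}_1 \leq x_1$ and $\tilde{x}_2 \geq x_2$, then $\Pr[T_1(p,\mathbf{x}) \leq t] \geq \Pr[T_1(\tilde{p},\tilde{\mathbf{x}}) \leq t]$; (2) if $\tilde{p} \geq p$, $\tilde{x}_1 \geq x_1$ and $\tilde{x}_2 \leq x_2$, then $\Pr[T_2(p,\mathbf{x}) \leq t] \geq \Pr[T_2(\tilde{p},\tilde{\mathbf{x}}) \leq t]$.
   Context: Population protocol with $n$ agents, each in a state from $Q=\{1,2,\bot\}$ (Opinion 1, Opinion 2, undecided). At each time step a scheduler picks an ordered pair $(i,j)$ of agents uniformly at random, independently of the past; $i$ is the initiator and $j$ the responder, and only the initiator changes state. The stubborn undecided state dynamics $\mathrm{USD}_p$ with stubbornness $p\in[0,1]$ has transitions: if the initiator is in state $2$ and the responder in state $1$, the initiator becomes $\bot$; if the initiator is in state $1$ and the responder in state $2$, the initiator becomes $\bot$ with probability $1-p$ and stays $1$ with probability $p$; if the initiator is $\bot$, it adopts the responder's state; otherwise nothing changes. A configuration $(x_1,x_2,u)$ gives the numbers of agents in states $1$, $2$, $\bot$ (summing to $n$). $\mathrm{USD}_p(\mathbf{x})$ is the process started in $\mathbf{x}$, time measured in interactions, and $T_i(p,\mathbf{x})$ is the first time at which all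 $n$ agents have Opinion $i$ in $\mathrm{USD}_p(\mathbf{x})$ ($\infty$ if never). *)

(* Defs.v *)
From HB Require Import structures.
From mathcomp Require Import all_boot all_order all_algebra.
Set Implicit Arguments. Unset Strict Implicit. Unset Printing Implicit Defensive.
Import Order.TTheory GRing.Theory Num.Theory.
Local Open Scope ring_scope.

Inductive state := Op1 | Op2 | Und.

Definition state_eqb (a b : state) : bool :=
  match a, b with
  | Op1, Op1 | Op2, Op2 | Und, Und => true
  | _, _ => false
  end.

Lemma state_eqP : Equality.axiom state_eqb.
Proof. by case; case; constructor. Qed.

HB.instance Definition _ := hasDecEq.Build state state_eqP.

Definition states : seq state := [:: Op1; Op2; Und].

(* A configuration: number of agents in each state. *)
Definition config := state -> nat.

Definition mkcfg (x1 x2 u : nat) : config :=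
  fun q => match q with Op1 => x1 | Op2 => x2 | Und => u end.

(* Probability that the scheduler picks an initiator in state a and a
   (distinct) responder in state b: ordered pairs of distinct agents,
   uniform among the n(n-1) such pairs. *)
Definition weight {R : numFieldType} (n : nat) (c : config) (a b : state) : R :=
  (c a * (c b - (a == b)))%:R / (n * n.-1)%:R.

(* Transition probability of USD_p: initiator in state a, responder in
   state b; probability that the initiator ends in state c. *)
Definition delta {R : numFieldType} (p : R) (a b c : state) : R :=
  match a, b with
  | Op2, Op1 => (c == Und)%:R
  | Op1, Op2 => if c == Op1 then p else if c == Und then 1 - p else 0
  | Und, b' => (c == b')%:R
  | a', _ => (c == a')%:R
  end.

Definition update (cf : config) (a c : state) : config :=
  fun q => (cf q - (q == a) + (q == c))%N.

Definition step {R : numFieldType} (p : R) (n : nat) (f : config -> R)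
    (cf : config) : R :=
  \sum_(a <- states) \sum_(b <- states) \sum_(c <- states)
    weight n cf a b * delta p a b c * f (update cf a c).

Definition consensus (n : nat) (i : state) (cf : config) : bool := cf i == n.

(* hitP p n i t cf = Pr[T_i(p, cf) <= t] in USD_p(cf) with n agents:
   the probability that the chain started in cf reaches the configuration
   where all agents have opinion i within t interactions. *)
Fixpoint hitP {R : numFieldType} (p : R) (n : nat) (i : state) (t : nat)
    (cf : config) : R :=
  if consensus n i cf then 1 else
  match t with
  | 0 => 0
  | t'.+1 => step p n (hitP p n i t') cf
  end.

(* Main.v *)
Require Import Defs.
From mathcomp Require Import all_boot all_order all_algebra ring lra zify.
From Stdlib Require Import FunctionalExtensionality.
Import Order.TTheory GRing.Theory Num.Theory.
Set Implicit Arguments. Unset Strict Implicit.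
Local Open Scope ring_scope.

Lemma upd_mk x1 x2 u a c : update (mkcfg x1 x2 u) a c =
  mkcfg (x1 - (Op1 == a) + (Op1 == c)) (x2 - (Op2 == a) + (Op2 == c)) (u - (Und == a) + (Und == c)).
Proof. by apply: functional_extensionality; case. Qed.

Definition Lf {R : numFieldType} (p : R) (f : config -> R) x1 x2 u : R :=
  (x1*x2)%:R*(1-p) * f (mkcfg x1.-1 x2 u.+1) + (x1*x2)%:R * f (mkcfg x1 x2.-1 u.+1)
  + (u*x1)%:R * f (mkcfg x1.+1 x2 u.-1) + (u*x2)%:R * f (mkcfg x1 x2.+1 u.-1)
  + ((x1*x1.-1 + x2*x2.-1 + u*u.-1 + x1*u + x2*u)%:R + (x1*x2)%:R * p) * f (mkcfg x1 x2 u).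

Lemma step_mk {R : numFieldType} (p : R) n f x1 x2 u :
  step p n f (mkcfg x1 x2 u) = Lf p f x1 x2 u / (n * n.-1)%:R.
Proof.
rewrite /step /states !big_cons !big_nil /weight !upd_mk /= /Lf.
case: x1 => [|x1]; case: x2 => [|x2]; case: u => [|u];
rewrite ?subn0 ?addn0 ?subn1 ?addn1 /= ?mul0n ?muln0 ?mulr0n ?mulr1n; ring.
Qed.

Section S.
Variables (R : realFieldType) (n : nat).

Definition Mono (f : config -> R) := forall a1 a2 a3 b1 b2 b3,
  (a1 + a2 + a3 = n)%N -> (b1 + b2 + b3 = n)%N -> (b1 <= a1)%N -> (a2 <= b2)%N ->
  f (mkcfg b1 b2 b3) <= f (mkcfg a1 a2 a3).

Lemma tm (k : nat) (c P Q : R) : 0 <= c -> ((0 < k)%N -> P <= Q) -> 0 <= k%:R * c * (Q - P).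
Proof.
move=> hc; case: k => [|k] h; first by rewrite mul0r mul0r.
by apply: mulr_ge0; [apply: mulr_ge0 | rewrite subr_ge0; apply: h].
Qed.


Lemma LA (p : R) f a b w : 0 <= p <= 1 -> Mono f -> (a + b + w.+1 = n)%N ->
  Lf p f a b w.+1 <= Lf p f a.+1 b w.
Proof.
move=> /andP[p0 p1] M hn; rewrite -subr_ge0.
have q0 : 0 <= 1 - p by rewrite subr_ge0.
set F := fun x y z => f (mkcfg x y z).
have -> : Lf p f a.+1 b w - Lf p f a b w.+1 =
   (a*b)%:R * (1-p) * (F a b w.+1 - F a.-1 b w.+2)
 + (a*b)%:R * 1 * (F a.+1 b.-1 w.+1 - F a b.-1 w.+2)
 + (w*a)%:R * 1 * (F a.+2 b w.-1 - F a.+1 b w)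
 + (w*b)%:R * 1 * (F a.+1 b.+1 w.-1 - F a b.+1 w)
 + (a*a.-1 + b*b.-1 + w*w.-1 + a*w + b*w)%:R * 1 * (F a.+1 b w - F a b w.+1)
 + (a*b)%:R * p * (F a.+1 b w - F a b w.+1)
 + b%:R * p * (F a.+1 b w - F a b.+1 w)
 + b%:R * (1-p) * (F a b w.+1 - F a b.+1 w)
 + w%:R * 1 * (F a.+1 b w - F a b w.+1)
 + a%:R * 1 * (F a.+1 b w - F a b w.+1)
 + b%:R * 1 * (F a.+1 b.-1 w.+1 - F a b w.+1)
 + w%:R * 1 * (F a.+2 b w.-1 - F a b w.+1).
  rewrite /Lf /F /=; clear hn M.
  case: a => [|a]; case: b => [|b]; case: w => [|w]; rewrite /= ?mul0n ?muln0 ?mulr0n ?mulr1n; ring.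
rewrite !addr_ge0 //; apply: tm => //; move=> hk; apply: M; nia.
Qed.

Lemma LB (p : R) f a b w : 0 <= p <= 1 -> Mono f -> (a + b.+1 + w = n)%N ->
  Lf p f a b.+1 w <= Lf p f a b w.+1.
Proof.
move=> /andP[p0 p1] M hn; rewrite -subr_ge0.
have q0 : 0 <= 1 - p by rewrite subr_ge0.
set F := fun x y z => f (mkcfg x y z).
have -> : Lf p f a b w.+1 - Lf p f a b.+1 w =
   (a*b)%:R * (1-p) * (F a.-1 b w.+2 - F a.-1 b.+1 w.+1)
 + (a*b)%:R * 1 * (F a b.-1 w.+2 - F a b w.+1)
 + (w*a)%:R * 1 * (F a.+1 b w - F a.+1 b.+1 w.-1)
 + (w*b)%:R * 1 * (F a b.+1 w - F a b.+2 w.-1)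
 + (a*a.-1 + b*b.-1 + w*w.-1 + a*w + b*w)%:R * 1 * (F a b w.+1 - F a b.+1 w)
 + (a*b)%:R * p * (F a b w.+1 - F a b.+1 w)
 + a%:R * 1 * (F a.+1 b w - F a b w.+1)
 + w%:R * 1 * (F a b w.+1 - F a b.+1 w)
 + a%:R * p * (F a b w.+1 - F a b.+1 w)
 + a%:R * (1-p) * (F a b w.+1 - F a.-1 b.+1 w.+1)
 + b%:R * 1 * (F a b w.+1 - F a b.+1 w)
 + w%:R * 1 * (F a b w.+1 - F a b.+2 w.-1).
  rewrite /Lf /F /=; clear hn M.
  case: a => [|a]; case: b => [|b]; case: w => [|w]; rewrite /= ?mul0n ?muln0 ?mulr0n ?mulr1n; ring.
rewrite !addr_ge0 //; apply: tm => //; move=> hk; apply: M; nia.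
Qed.
End S.

Section S2.
Variables (R : realFieldType) (n : nat).

Lemma Lp (p pt : R) f x1 x2 u : 0 <= pt -> pt <= p -> p <= 1 -> Mono n f ->
  (x1 + x2 + u = n)%N -> Lf pt f x1 x2 u <= Lf p f x1 x2 u.
Proof.
move=> p0 pp p1 M hn; rewrite -subr_ge0.
have -> : Lf p f x1 x2 u - Lf pt f x1 x2 u =
  (x1*x2)%:R * (p - pt) * (f (mkcfg x1 x2 u) - f (mkcfg x1.-1 x2 u.+1)).
  by rewrite /Lf; ring.
apply: tm; first by rewrite subr_ge0.
move=> hk; apply: M; nia.
Qed.

Lemma tm1 (k : nat) (c P Q : R) : 0 <= c -> ((0 < k)%N -> P <= Q) -> k%:R * c * P <= k%:R * c * Q.
Proof. by move=> hc h; rewrite -subr_ge0 -mulrBr; apply: tm. Qed.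

Lemma Lf_le (p : R) (f g : config -> R) x1 x2 u : 0 <= p <= 1 ->
  (forall a b c, (a + b + c = n)%N -> f (mkcfg a b c) <= g (mkcfg a b c)) ->
  (x1 + x2 + u = n)%N -> Lf p f x1 x2 u <= Lf p g x1 x2 u.
Proof.
move=> /andP[p0 p1] H hn.
have q0 : 0 <= 1 - p by rewrite subr_ge0.
rewrite -subr_ge0.
have -> : Lf p g x1 x2 u - Lf p f x1 x2 u =
  (x1*x2)%:R*(1-p)*(g (mkcfg x1.-1 x2 u.+1) - f (mkcfg x1.-1 x2 u.+1))
  + (x1*x2)%:R*1*(g (mkcfg x1 x2.-1 u.+1) - f (mkcfg x1 x2.-1 u.+1))
  + (u*x1)%:R*1*(g (mkcfg x1.+1 x2 u.-1) - f (mkcfg x1.+1 x2 u.-1))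
  + (u*x2)%:R*1*(g (mkcfg x1 x2.+1 u.-1) - f (mkcfg x1 x2.+1 u.-1))
  + 1%:R*((x1*x1.-1 + x2*x2.-1 + u*u.-1 + x1*u + x2*u)%:R + (x1*x2)%:R * p)*(g (mkcfg x1 x2 u) - f (mkcfg x1 x2 u)).
  by rewrite /Lf; ring.
rewrite !addr_ge0 //; apply: tm => //; try (by apply: addr_ge0 => //; apply: mulr_ge0);
move=> hk; apply: H; nia.
Qed.

Lemma nn1 (m : nat) : (m * m.-1)%:R = m%:R * m%:R - m%:R :> R.
Proof. case: m => [|m] /=; rewrite natrM; ring. Qed.

Lemma Lf_one (p : R) x1 x2 u : (x1 + x2 + u = n)%N ->
  Lf p (fun _ => 1) x1 x2 u = (n * n.-1)%:R.
Proof.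
move=> <-; rewrite /Lf !natrD !nn1 !natrM !natrD; ring.
Qed.

Lemma Lf_neg (p : R) f x1 x2 u : Lf p (fun c => - f c) x1 x2 u = - Lf p f x1 x2 u.
Proof. rewrite /Lf; ring. Qed.

Lemma Lchain (p : R) f : 0 <= p <= 1 -> Mono n f -> forall d x1 x2 u y1 y2 v,
  (x1 + x2 + u = n)%N -> (y1 + y2 + v = n)%N -> (y1 <= x1)%N -> (x2 <= y2)%N ->
  (x1 - y1 + (y2 - x2) = d)%N -> Lf p f y1 y2 v <= Lf p f x1 x2 u.
Proof.
move=> hp M; elim=> [|d IH] x1 x2 u y1 y2 v hx hy h1 h2 hd.
  have e1 : x1 = y1 by lia.
  have e2 : x2 = y2 by lia.
  have e3 : u = v by lia.
  by rewrite e1 e2 e3.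
case: (ltnP x2 y2) => h22.
  case: y2 hy h2 hd h22 => [|b] hy h2 hd h22; first by [].
  apply: le_trans (LB hp M hy) _.
  apply: (IH _ _ _ _ _ _ hx) => //; lia.
case: v hy hd => [|w] hy hd; first lia.
apply: le_trans (LA hp M (_ : (y1 + y2 + w.+1 = n)%N)) _ => //.
apply: (IH _ _ _ _ _ _ hx) => //; lia.
Qed.

Lemma step_mono (p pt : R) f x1 x2 u y1 y2 v : 0 <= pt -> pt <= p -> p <= 1 -> Mono n f ->
  (x1 + x2 + u = n)%N -> (y1 + y2 + v = n)%N -> (y1 <= x1)%N -> (x2 <= y2)%N ->
  step pt n f (mkcfg y1 y2 v) <= step p n f (mkcfg x1 x2 u).
Proof.
move=> p0 pp p1 M hx hy h1 h2; rewrite !step_mk.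
apply: ler_wpM2r; first by rewrite invr_ge0 ler0n.
apply: le_trans (Lp p0 pp p1 M hx).
have hpt : 0 <= pt <= 1 by rewrite p0 (le_trans pp p1).
exact: (Lchain hpt M hx hy h1 h2 (erefl _)).
Qed.

Lemma step_le (p : R) f g x1 x2 u : 0 <= p <= 1 ->
  (forall a b c, (a + b + c = n)%N -> f (mkcfg a b c) <= g (mkcfg a b c)) ->
  (x1 + x2 + u = n)%N -> step p n f (mkcfg x1 x2 u) <= step p n g (mkcfg x1 x2 u).
Proof.
move=> hp H hx; rewrite !step_mk; apply: ler_wpM2r; first by rewrite invr_ge0 ler0n.
exact: Lf_le.
Qed.

Lemma hit_le1 (p : R) i t x1 x2 u : (1 < n)%N -> 0 <= p <= 1 -> (x1 + x2 + u = n)%N ->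
  hitP p n i t (mkcfg x1 x2 u) <= 1.
Proof.
move=> n1 hp; elim: t x1 x2 u => [|t IH] x1 x2 u hx /=; first by case: ifP.
case: ifP => // _.
apply: le_trans (step_le hp (g := fun _ => 1) (fun a b c h => IH a b c h) hx) _.
rewrite step_mk Lf_one // divff // pnatr_eq0 muln_eq0; apply/norP; split; lia.
Qed.
End S2.

Lemma main1 (R : realFieldType) (n : nat) t : (1 < n)%N -> forall (p pt : R),
  0 <= pt -> pt <= p -> p <= 1 -> forall x1 x2 u y1 y2 v,
  (x1 + x2 + u = n)%N -> (y1 + y2 + v = n)%N -> (y1 <= x1)%N -> (x2 <= y2)%N ->
  hitP pt n Op1 t (mkcfg y1 y2 v) <= hitP p n Op1 t (mkcfg x1 x2 u).
Proof.
move=> n1; elim: t => [|t IH] p pt p0 pp p1 x1 x2 u y1 y2 v hx hy h1 h2.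
  rewrite /= /consensus /=.
  case: (eqVneq x1 n) => ex; first by case: ifP.
  have -> : (y1 == n) = false by apply/eqP; lia.
  by [].
have hpt : 0 <= pt <= 1 by rewrite p0 (le_trans pp p1).
have hp : 0 <= p <= 1 by rewrite (le_trans p0 pp) p1.
have [ex|ex] := eqVneq x1 n.
  apply: le_trans (hit_le1 Op1 t.+1 n1 hpt hy) _.
  by rewrite /= /consensus /= ex eqxx.
rewrite /= /consensus /= (negbTE ex).
have -> : (y1 == n) = false by apply/eqP; lia.
apply: le_trans (step_le (g := hitP p n Op1 t) hpt _ hy) _.
  by move=> a b c hc; apply: (IH p pt) => //.
apply: step_mono => //.
rewrite /Mono => a1 a2 a3 b1 b2 b3 ha hb hab1 hab2; exact: (IH p p (le_trans p0 pp) (lexx p) p1).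
Qed.

Lemma main2 (R : realFieldType) (n : nat) t : (1 < n)%N -> forall (p pt : R),
  0 <= p -> p <= pt -> pt <= 1 -> forall x1 x2 u y1 y2 v,
  (x1 + x2 + u = n)%N -> (y1 + y2 + v = n)%N -> (x1 <= y1)%N -> (y2 <= x2)%N ->
  hitP pt n Op2 t (mkcfg y1 y2 v) <= hitP p n Op2 t (mkcfg x1 x2 u).
Proof.
move=> n1; elim: t => [|t IH] p pt p0 pp p1 x1 x2 u y1 y2 v hx hy h1 h2.
  rewrite /= /consensus /=.
  case: (eqVneq x2 n) => ex; first by case: ifP.
  have -> : (y2 == n) = false by apply/eqP; lia.
  by [].
have hp : 0 <= p <= 1 by rewrite p0 (le_trans pp p1).
have hpt : 0 <= pt <= 1 by rewrite (le_trans p0 pp) p1.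
have [ex|ex] := eqVneq x2 n.
  apply: le_trans (hit_le1 Op2 t.+1 n1 hpt hy) _.
  by rewrite /= /consensus /= ex eqxx.
rewrite /= /consensus /= (negbTE ex).
have -> : (y2 == n) = false by apply/eqP; lia.
apply: le_trans (step_le (g := hitP p n Op2 t) hpt _ hy) _.
  by move=> a b c hc; apply: (IH p pt) => //.
rewrite -[X in _ <= X]opprK -[X in X <= _]opprK lerN2 !step_mk -!mulNr -!Lf_neg -!step_mk.
apply: (step_mono (f := fun c => - hitP p n Op2 t c)) => //.
rewrite /Mono => a1 a2 a3 b1 b2 b3 ha hb hab1 hab2; rewrite /= lerN2; exact: (IH p p p0 (lexx p) (le_trans pp p1)).
Qed.

Theorem theorem2 (R : realFieldType) (n : nat) (p pt : R)
    (x1 x2 u y1 y2 v : nat) (t : nat) :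
  (1 < n)%N ->
  0 <= p <= 1 -> 0 <= pt <= 1 ->
  (x1 + x2 + u)%N = n -> (y1 + y2 + v)%N = n ->
  ((pt <= p -> (y1 <= x1)%N -> (x2 <= y2)%N ->
      hitP pt n Op1 t (mkcfg y1 y2 v) <= hitP p n Op1 t (mkcfg x1 x2 u))
   /\
   (p <= pt -> (x1 <= y1)%N -> (y2 <= x2)%N ->
      hitP pt n Op2 t (mkcfg y1 y2 v) <= hitP p n Op2 t (mkcfg x1 x2 u))).
Proof.
move=> n1 /andP[p0 p1] /andP[q0 q1] hx hy; split=> pp h1 h2.
  exact: main1.
exact: main2.
Qed.
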